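(* Let $k\ge 2$ be an integer. If $G$ is a $(k+1)$-regular graph having a $k$-conversion set of size $k$, then the order of $G$ is at most $2k+2$. Moreover, for every $k\ge 2$ there exists a $(k+1)$-regular graph of order $2k+2$ which has a $k$-conversion set of size $k$.
   Context: For a graph $G=(V,E)$, a positive integer $k$ and a set $S_0\subseteq V$, the irreversible $k$-threshold conversion process is defined by: for $t=1,2,\dots$, $S_t$ is obtained from $S_{t-1}$ by adjoining all vertices having at least $k$ neighbours in $S_{t-1}$. The set $S_0$ is a $k$-conversion set of $G$ if $S_t=V(G)$ for some $t\ge 0$. *)

(* Defs.v *)
From mathcomp Require Import all_boot.
Set Implicit Arguments. Unset Strict Implicit. Unset Printing Implicit Defensive.

Definition simple_graph (T : finType) (e : rel T) : Prop :=
  symmetric e /\ irreflexive e.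

Definition nbhd (T : finType) (e : rel T) (v : T) : {set T} := [set u | e v u].

Definition regular (T : finType) (e : rel T) (r : nat) : Prop :=
  forall v : T, #|nbhd e v| = r.

Definition conv_step (T : finType) (e : rel T) (k : nat) (S : {set T}) : {set T} :=
  S :|: [set v | k <= #|nbhd e v :&: S|].

Definition conv_iter (T : finType) (e : rel T) (k : nat) (t : nat) (S0 : {set T}) : {set T} :=
  iter t (conv_step e k) S0.

Definition conversion_set (T : finType) (e : rel T) (k : nat) (S0 : {set T}) : Prop :=
  exists t : nat, conv_iter e k t S0 = [set: T].

(* Main.v *)
Require Import Defs.
From mathcomp Require Import all_boot zify.

Section Part1.
Variables (k : nat) (T : finType) (e : rel T).
Hypothesis sg : simple_graph e.
Hypothesis reg : regular e k.+1.
Variable S0 : {set T}.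
Variable N : nat.
Hypothesis HN : conv_iter e k N S0 = [set: T].

Definition tm (v : T) : nat :=
  find (fun i => v \in conv_iter e k i S0) (iota 0 N.+1).

Lemma tm_has v : has (fun i => v \in conv_iter e k i S0) (iota 0 N.+1).
Proof. apply/hasP; exists N; first by rewrite mem_iota; lia. by rewrite HN inE. Qed.

Lemma tm_le v : tm v <= N.
Proof. have := tm_has v; rewrite has_find size_iota /tm. lia. Qed.

Lemma tm_in v : v \in conv_iter e k (tm v) S0.
Proof.
have := nth_find 0 (tm_has v). rewrite nth_iota ?add0n //.
have := tm_le v; rewrite /tm; lia.
Qed.

Lemma tm_before v i : i < tm v -> v \notin conv_iter e k i S0.
Proof.
move=> lt; have := before_find 0 lt. rewrite nth_iota ?add0n; first by move=> ->.
have := tm_le v; lia.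
Qed.

Lemma tm_min v i : i <= N -> v \in conv_iter e k i S0 -> tm v <= i.
Proof.
move=> hi hv; rewrite leqNgt; apply/negP => lt.
by move: (@tm_before v i lt); rewrite hv.
Qed.

Definition key (v : T) : nat := tm v * #|T| + enum_rank v.

Lemma key_lt u v : tm u < tm v -> key u < key v.
Proof.
move=> lt; have h1 : (enum_rank u : nat) < #|T| by exact: ltn_ord.
have h2 : (tm u).+1 * #|T| <= tm v * #|T| by rewrite leq_mul2r lt orbT.
rewrite mulSn in h2; rewrite /key. lia.
Qed.

Lemma key_inj u v : key u = key v -> u = v.
Proof.
move=> h; case: (ltngtP (tm u) (tm v)) => c.
- by move: (key_lt _ _ c); rewrite h ltnn.
- by move: (key_lt _ _ c); rewrite h ltnn.
- move: h; rewrite /key c => h.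
  apply: enum_rank_inj; apply: val_inj => /=; exact: (addnI h).
Qed.

Definition lo v := [set u | e v u & key u < key v].
Definition hi v := [set u | e v u & key v < key u].

Lemma deg_split v : #|nbhd e v| = #|lo v| + #|hi v|.
Proof.
rewrite -(cardsID [set u | key u < key v] (nbhd e v)).
have -> : nbhd e v :&: [set u | key u < key v] = lo v by apply/setP => u; rewrite !inE.
have -> : nbhd e v :\: [set u | key u < key v] = hi v; last by [].
apply/setP => u; rewrite !inE.
case E: (e v u); rewrite ?andbT ?andbF //=.
have : u != v by apply/eqP => uv; move: E; rewrite uv (proj2 sg v).
move=> neq; have : key u != key v by apply/contra: neq => /eqP/key_inj ->.
rewrite -leqNgt; lia.
Qed.

Lemma card_sum (A : {set T}) : #|A| = \sum_u (u \in A : nat).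
Proof. by rewrite -sum1_card big_mkcond /=; apply: eq_bigr => u _; case: (u \in A). Qed.

Lemma sum_hi_lo : \sum_v #|hi v| = \sum_v #|lo v|.
Proof.
rewrite (eq_bigr (fun v => \sum_u (e v u && (key v < key u) : nat))); last first.
  by move=> v _; rewrite card_sum; apply: eq_bigr => u _; rewrite inE.
rewrite exchange_big /=; apply: eq_bigr => v _.
rewrite card_sum; apply: eq_bigr => u _; rewrite inE (proj1 sg).
done.
Qed.

Lemma lo_ge v : v \notin S0 -> k <= #|lo v|.
Proof.
move=> vS.
have t0 : 0 < tm v.
  rewrite lt0n; apply/negP => /eqP h; have := tm_in v; rewrite h /=.
  by rewrite /conv_iter /= (negbTE vS).
have hj : tm v = (tm v).-1.+1 by rewrite prednK.
have hb := tm_before _ _ (_ : (tm v).-1 < tm v).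
have := tm_in v; rewrite {1}hj /conv_iter iterS -/(conv_iter e k _ S0).
rewrite /conv_step in_setU (negbTE (hb _)) /= ?inE; last by lia.
move=> h.
apply: (leq_trans h); apply: subset_leq_card; apply/subsetP => u.
rewrite !inE => /andP [evu uS]; rewrite evu /=; apply: (key_lt _ _).
have hle : (tm v).-1 <= N by have := tm_le v; lia.
have := tm_min _ _ hle uS. lia.
Qed.

Lemma part1 : k <= #|S0| -> #|S0| = k -> 2 <= k -> #|T| <= 2 * k + 2.
Proof.
move=> _ hS hk.
case: (leqP #|T| k) => hT; first lia.
have : 0 < #|~: S0| by have := cardsC S0; lia.
case/card_gt0P => x; rewrite inE => xS.
case: (@arg_maxnP T x xpredT key erefl) => m _ Hm.
have mS : m \notin S0.
  apply/negP => mS; have := tm_min m 0 (leq0n N) (_ : m \in conv_iter e k 0 S0).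
  rewrite /conv_iter /= mS => /(_ isT); rewrite leqn0 => /eqP tm0.
  have := Hm x isT; have : (enum_rank m : nat) < #|T| by exact: ltn_ord. rewrite /key tm0 /=.
  have : 0 < tm x.
    rewrite lt0n; apply/negP => /eqP h; have := tm_in x; rewrite h /=.
    by rewrite /conv_iter /= (negbTE xS).
  move=> tx; have : #|T| <= tm x * #|T| by rewrite leq_pmull.
  move=> a b; rewrite mul0n add0n => c; have := leq_trans a (leq_trans (leq_addr _ _) c); by rewrite leqNgt b.
have lom : #|lo m| = k.+1.
  rewrite -(reg m); have -> // : lo m = nbhd e m; apply/setP => u; rewrite !inE.
  case E: (e m u) => //=.
  have : u != m by apply/eqP => uv; move: E; rewrite uv (proj2 sg m).
  move=> neq; have : key u != key m by apply/contra: neq => /eqP/key_inj ->.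
  have := Hm u isT; lia.
have Hsum : \sum_v #|nbhd e v| = #|T| * k.+1.
  by rewrite -sum_nat_const; apply: eq_bigr => v _; rewrite reg.
have Hsum2 : \sum_v #|nbhd e v| = 2 * \sum_v #|lo v|.
  rewrite (eq_bigr _ (fun v _ => deg_split v)) big_split /= sum_hi_lo; lia.
have Hlow : \sum_v (k * (v \notin S0) + (v == m)) <= \sum_v #|lo v|.
  apply: leq_sum => v _.
  case: (eqVneq v m) => [->|vm]; first by rewrite mS lom; lia.
  case: (boolP (v \in S0)) => vS /=; first by rewrite muln0.
  by rewrite muln1 addn0 lo_ge.
rewrite big_split /= -big_distrr /= in Hlow.
have e1 : \sum_v (v == m : nat) = 1.
  rewrite (bigD1 m) //= eqxx big1 // => v /negbTE ->; done.
have e2 : \sum_v (v \notin S0 : nat) = #|~: S0|.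
  by rewrite card_sum; apply: eq_bigr => v _; rewrite inE.
rewrite e1 e2 in Hlow.
have := cardsC S0; rewrite hS => hc.
have : #|T| * k.+1 >= 2 * (k * (#|T| - k) + 1) by lia.
nia.
Qed.
End Part1.

Section Part2.
Variable k : nat.
Definition VT : finType := (bool * 'I_k.+1)%type.
Definition eb : rel VT := fun x y => x.1 != y.1.
Definition SS : {set VT} := (pair false) @: [set~ ord_max].

Lemma nb x : nbhd eb x = (pair (~~ x.1)) @: [set: 'I_k.+1].
Proof.
apply/setP => y; rewrite inE; apply/idP/imsetP.
- case: y => b i /=; rewrite /eb /= => h; exists i; first by rewrite inE.
  by congr (_, _); case: (x.1) b h => [] [].
- case=> i _ ->; rewrite /eb /=; by case: (x.1).
Qed.

Lemma nb_card x : #|nbhd eb x| = k.+1.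
Proof. by rewrite nb card_imset ?cardsT ?card_ord // => a b []. Qed.

Lemma SS_card : #|SS| = k.
Proof. by rewrite card_imset ?cardsC1 ?card_ord // => a b []. Qed.

Lemma part2 : [/\ simple_graph eb, regular eb k.+1, #|VT| = 2 * k + 2 &
           exists S0 : {set VT}, #|S0| = k /\ conversion_set eb k S0].
Proof.
split.
- split; first by move=> x y; rewrite /eb eq_sym.
  by move=> x; rewrite /eb eqxx.
- exact: nb_card.
- rewrite card_prod card_bool card_ord; lia.
- exists SS; split; first exact: SS_card.
  exists 2; apply/eqP; rewrite eqEsubset subsetT /=; apply/subsetP => v _; rewrite /conv_iter /=.
  set S1 := conv_step eb k SS.
  have hT : forall i, (true, i) \in S1.
    move=> i; rewrite /S1 /conv_step in_setU inE; apply/orP; right.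
    have -> : nbhd eb (true, i) :&: SS = SS.
      apply/setIidPr/subsetP => y /imsetP [j _ ->]; by rewrite inE.
    by rewrite SS_card.
  move: v; rewrite /VT /= => -[[] i]; rewrite /conv_step in_setU; apply/orP.
  + by left; apply: hT.
  + right; rewrite inE.
    have -> : nbhd eb (false, i) :&: S1 = nbhd eb (false, i).
      apply/setIidPl/subsetP => y; rewrite nb => /imsetP [j _ ->]; exact: hT.
    by rewrite nb_card.
Qed.
End Part2.

Theorem proposition3p2 :
  (forall (k : nat), 2 <= k ->
     forall (T : finType) (e : rel T),
       simple_graph e -> regular e k.+1 ->
       (exists S0 : {set T}, #|S0| = k /\ conversion_set e k S0) ->
       #|T| <= 2 * k + 2)
  /\
  (forall (k : nat), 2 <= k ->
     exists (T : finType) (e : rel T),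
       [/\ simple_graph e, regular e k.+1, #|T| = 2 * k + 2 &
           exists S0 : {set T}, #|S0| = k /\ conversion_set e k S0]).
Proof.
split.
- move=> k hk T e sg reg [S0 [hS [N HN]]].
  exact: (@part1 k T e sg reg S0 N HN (eq_leq (esym hS)) hS hk).
- move=> k _; exists (VT k), (@eb k); exact: part2.
Qed.
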